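(* Let $\Bbbk$ be a field, $R=\Bbbk[x_1,\dots,x_m]$ with the standard $\mathbb Z^m$-grading, and let $I\subseteq R$ be a monomial ideal with minimal monomial generating set $S=\{s_1,\dots,s_n\}$. Suppose that $R/I$ is of generic type. Then the algebraic Scarf complex $F_{\Delta}$ of $I$ is a minimal free multigraded resolution of $R/I$.
   Context: For $A\subseteq S$ let $m_A$ denote the least common multiple of the monomials in $A$ (with $m_\emptyset=1$), and identify monomials with their exponent vectors in $\mathbb Z^m$. The LCM-lattice $\Lambda$ is the set $\{m_A : \emptyset\ne A\subseteq S\}$. An element $\alpha\in\Lambda$ is called generic if the set $\{A\subseteq S : m_A=\alpha\}$ is a closed interval in the Boolean lattice of subsets of $S$, i.e. there are sets $I_\alpha\subseteq I^\alpha$ with $\{A : m_A=\alpha\}=\{A : I_\alpha\subseteq A\subseteq I^\alpha\}$. $R/I$ is of generic type if every element of $\Lambda$ is generic. The Scarf complex is $\Delta=\{A\subseteq S : m_B\neq m_A \text{ for all } B\subseteq S,\ B\ne A\}$ (a simplicial complex). Fix a total order on $S$. The algebraic Scarf complex $F_\Delta$ is the complex of free multigraded $R$-modules whose homological degree $i$ term has basis $\{e_A : A\in\Delta, |A|=i\}$ with $e_A$ of multidegree $m_A$, and differential $\partial(e_A)=\sum_{s\in A}\operatorname{sign}(s,A)\,\frac{m_A}{m_{A\setminus\{s\}}}\,e_{A\setminus\{s\}}$, where $\operatorname{sign}(s,A)=(-1)^{j+1}$ if $s$ is the $j$-th element of $A$; it is augmented to $R/I$ via $e_\emptyset\mapsto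 1$. *)

(* Defs.v *)
From HB Require Import structures.
From mathcomp Require Import all_boot all_order all_algebra.
From mathcomp Require Import mpoly.
Set Implicit Arguments. Unset Strict Implicit. Unset Printing Implicit Defensive.
Import Order.TTheory GRing.Theory.
Local Open Scope ring_scope.

Section Scarf.
Variables (k : fieldType) (m n : nat).
(* The minimal generators s_1,...,s_n, given by their exponent vectors;
   the total order on S is the order of the indices 'I_n. *)
Variable s : 'I_n -> 'X_{1..m}.

Local Notation R := {mpoly k[m]}.

(* m_A : lcm of the monomials in A (componentwise max; m_emptyset = 1). *)
Definition lcmS (A : {set 'I_n}) : 'X_{1..m} :=
  [multinom (\max_(i in A) s i j)%N | j < m].

Definition mdiv (a b : 'X_{1..m}) : bool := [forall j, (a j <= b j)%N].

Definition minimal_gens : Prop := forall i j : 'I_n, i != j -> ~~ mdiv (s i) (s j).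

Definition in_ideal (p : R) : Prop :=
  exists q : 'I_n -> R, p = \sum_(i < n) q i * 'X_[s i].

Definition generic_type : Prop :=
  forall A0 : {set 'I_n}, A0 != set0 ->
    exists Il Iu : {set 'I_n}, Il \subset Iu /\
      forall A : {set 'I_n}, lcmS A = lcmS A0 <-> (Il \subset A /\ A \subset Iu).

Definition scarf : pred {set 'I_n} :=
  fun A => [forall B : {set 'I_n}, (B != A) ==> (lcmS B != lcmS A)].

(* sign(t, A) = (-1)^(j+1) where t is the j-th element of A *)
Definition sgn (t : 'I_n) (A : {set 'I_n}) : R :=
  (-1) ^+ #|[set u in A | (u < t)%N]|.

(* the monomial m_A / m_B (for m_B | m_A) *)
Definition mquot (a b : 'X_{1..m}) : 'X_{1..m} := [multinom (a j - b j)%N | j < m].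

(* An element of the free module F_i = \bigoplus_{A in Delta, |A| = i} R e_A
   is represented by its coefficient function c (c A = coefficient of e_A). *)
Definition chain (i : nat) (c : {set 'I_n} -> R) : Prop :=
  forall A, c A != 0 -> scarf A /\ #|A| = i.

(* The differential: coefficient of e_B in d(sum_A c A e_A), i.e.
   sum over A = B + {t} in Delta of sign(t,A) * (m_A/m_B) * c A. *)
Definition bd (c : {set 'I_n} -> R) (B : {set 'I_n}) : R :=
  \sum_(t : 'I_n | (t \notin B) && scarf (t |: B))
     sgn t (t |: B) * 'X_[mquot (lcmS (t |: B)) (lcmS B)] * c (t |: B).

(* F_Delta, augmented by F_0 -> R/I, e_emptyset |-> 1, is a minimal free
   resolution of R/I. *)
Definition scarf_minimal_free_resolution : Prop :=
  (forall i c, chain i.+1 c -> chain i (bd c)) /\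
  (* it is a complex: d o d = 0, and the augmentation kills d(F_1) *)
  (forall i c, chain i.+2 c -> forall B, bd (bd c) B = 0) /\
  (forall c, chain 1 c -> in_ideal (bd c set0)) /\
  (* exactness at R/I: augmentation F_0 -> R/I is surjective *)
  (forall r : R, exists c, chain 0 c /\ in_ideal (r - c set0)) /\
  (* exactness at F_0: ker(augmentation) = d(F_1) *)
  (forall c, chain 0 c -> in_ideal (c set0) ->
     exists d, chain 1 d /\ forall B, bd d B = c B) /\
  (forall i c, chain i.+1 c -> (forall B, bd c B = 0) ->
     exists d, chain i.+2 d /\ forall B, bd d B = c B) /\
  (* minimality: d(F) is contained in (x_1,...,x_m) F *)
  (forall i c, chain i c -> forall B, (bd c B)@_0%MM = 0).

End Scarf.

(* Main.v *)
From HB Require Import structures.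
From mathcomp Require Import all_boot all_order all_algebra.
From mathcomp Require Import mpoly.
From mathcomp Require Import ring zify.
Require Import Defs.
Set Implicit Arguments. Unset Strict Implicit. Unset Printing Implicit Defensive.
Import Order.TTheory GRing.Theory.

Section Proof.
Variables (k : fieldType) (m n : nat) (s : 'I_n -> 'X_{1..m}).
Local Notation R := {mpoly k[m]}.
Local Notation L := (lcmS s).
Implicit Types A B C : {set 'I_n}.
Implicit Types a b : 'X_{1..m}.

Lemma LE A j : L A j = (\max_(i in A) s i j)%N.
Proof. by rewrite /lcmS mnmE. Qed.

Lemma mdivP a b : reflect (forall j, (a j <= b j)%N) (mdiv a b).
Proof. exact: (iffP forallP). Qed.

Lemma mdiv_refl a : mdiv a a.
Proof. by apply/mdivP. Qed.

Lemma mdiv_trans a b c : mdiv a b -> mdiv b c -> mdiv a c.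
Proof. move=> /mdivP h1 /mdivP h2; apply/mdivP=> j; exact: leq_trans (h1 j) (h2 j). Qed.

Lemma L_le A b : mdiv (L A) b = [forall i in A, mdiv (s i) b].
Proof.
apply/mdivP/forall_inP => [h i iA|h j].
  apply/mdivP=> j; apply: leq_trans (h j); rewrite LE; exact: leq_bigmax_cond.
rewrite LE; apply/bigmax_leqP => i iA; exact: (mdivP _ _ (h i iA)).
Qed.

Lemma L_ge A i : i \in A -> mdiv (s i) (L A).
Proof. move=> iA; apply/mdivP=> j; rewrite LE; exact: leq_bigmax_cond. Qed.

Lemma L_mono A B : A \subset B -> mdiv (L A) (L B).
Proof.
move=> /subsetP sAB; rewrite L_le; apply/forall_inP=> i iA; exact: L_ge (sAB _ iA).
Qed.

Lemma L_U1E t A j : L (t |: A) j = maxn (s t j) (L A j).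
Proof.
apply/eqP; rewrite eqn_leq; apply/andP; split.
  rewrite LE; apply/bigmax_leqP=> i; rewrite in_setU1 => /orP[/eqP->|iA].
    exact: leq_maxl.
  by apply: leq_trans (leq_maxr _ _); rewrite LE; exact: leq_bigmax_cond.
rewrite geq_max; apply/andP; split.
  exact: (mdivP _ _ (L_ge (setU11 t A))).
exact: (mdivP _ _ (L_mono (subsetUr [set t] A))).
Qed.

Lemma L_eqU1 t A B : L A = L B -> L (t |: A) = L (t |: B).
Proof. by move=> e; apply/mnmP=> j; rewrite !L_U1E e. Qed.

Lemma L0 : L set0 = 0%MM.
Proof. by apply/mnmP=> j; rewrite LE big_set0 mnmE. Qed.

Lemma L1 t : L [set t] = s t.
Proof. by apply/mnmP=> j; rewrite LE big_set1. Qed.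

Definition dg (a : 'X_{1..m}) := (\sum_(j < m) a j)%N.

Lemma dg_le a b : mdiv a b -> (dg a <= dg b)%N.
Proof. move=> /mdivP h; exact: leq_sum. Qed.

Lemma dg_eq a b : mdiv a b -> (dg b <= dg a)%N -> a = b.
Proof.
move=> /mdivP h hd; have e : dg b = (dg a + \sum_(j < m) (b j - a j))%N.
  by rewrite /dg -big_split /=; apply: eq_bigr => j _; rewrite subnKC.
have : (\sum_(j < m) (b j - a j) == 0)%N.
  by rewrite -(eqn_add2l (dg a)) addn0 -e eqn_leq hd dg_le //; apply/mdivP.
rewrite sum_nat_eq0 => /forallP h0; apply/mnmP=> j; apply/eqP; rewrite eqn_leq h /=.
by rewrite -subn_eq0; exact: (h0 j).
Qed.

Lemma scarfP A : reflect (forall B, B != A -> L B != L A) (scarf s A).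
Proof. apply: (iffP forallP) => [h B|h B]; first exact/implyP/h. exact/implyP/h. Qed.

Lemma scarf_face t B : t \notin B -> scarf s (t |: B) -> scarf s B.
Proof.
move=> tB /scarfP h; apply/scarfP => B' nB'; apply/negP => /eqP e.
have e2 := L_eqU1 t e.
have [eC|nC] := eqVneq (t |: B') (t |: B); last by move: (h _ nC); rewrite e2 eqxx.
have tB' : t \in B' .
  apply/negPn/negP => tB'; move/eqP: nB'; apply; apply/setP=> u.
  move/setP: eC => /(_ u); rewrite !in_setU1; case: eqP => [->|] //=.
  by rewrite (negbTE tB) (negbTE tB').
have : B' = t |: B by rewrite -eC; apply/setP=> u; rewrite in_setU1; case: eqP=> // ->.
move=> eB; have nB : B != t |: B.
  by apply/eqP => /setP /(_ t); rewrite setU11 (negbTE tB).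
by move: (h _ nB); rewrite -e -eB eqxx.
Qed.

Lemma nonscarf_fiber A A' : ~~ scarf s A -> L A' = L A -> ~~ scarf s A'.
Proof.
move=> nA e; apply/negP => /scarfP h.
have [eA|nA'] := eqVneq A A'; first by move: nA; rewrite eA => /negP; apply; apply/scarfP.
by move: (h _ nA'); rewrite e eqxx.
Qed.

Local Open Scope ring_scope.

Definition sgk t A : k := (-1) ^+ #|[set u in A | (u < t)%N]|.
Definition kd (x : {set 'I_n} -> k) B : k :=
  \sum_(t | t \notin B) sgk t (t |: B) * x (t |: B).

Lemma card_rm (P : pred 'I_n) A v : v \in A ->
  #|[set u in A | P u]| = (P v + #|[set u in A :\ v | P u]|)%N.
Proof.
move=> vA; rewrite (cardsD1 v) inE vA /=; congr (_ + _)%N.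
by apply: eq_card => u; rewrite !inE andbA.
Qed.

Lemma sgk_swap t v A : t != v -> t \in A -> v \in A ->
  sgk t A * sgk v (A :\ t) = - (sgk v A * sgk t (A :\ v)).
Proof.
move=> ntv tA vA; rewrite /sgk (card_rm (fun u => (u < t)%N) vA).
rewrite (card_rm (fun u => (u < v)%N) tA) !exprD /=.
case: ltngtP => h /=.
- by rewrite expr0 expr1; ring.
- by rewrite expr0 expr1; ring.
- by move/val_inj: h => h; rewrite h eqxx in ntv.
Qed.

Lemma sgk_sq t A : sgk t A * sgk t A = 1.
Proof. by rewrite /sgk -exprMn mulrNN mulr1 expr1n. Qed.

Lemma asym_sum (g : 'I_n -> 'I_n -> k) :
  (forall t, g t t = 0) -> (forall t t', g t t' = - g t' t) ->
  \sum_t \sum_t' g t t' = 0.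
Proof.
move=> g0 ga.
have -> : \sum_t \sum_t' g t t' = \sum_(t : 'I_n) \sum_(t' : 'I_n)
   ((if (t < t')%N then g t t' else 0) + (if (t' < t)%N then g t t' else 0)).
  apply: eq_bigr => t _; apply: eq_bigr => t' _.
  case: ltngtP => h; rewrite ?addr0 ?add0r //.
  by move/val_inj: h => ->; rewrite g0.
under eq_bigr do rewrite big_split /=.
rewrite big_split /=.
rewrite [X in _ + X]exchange_big /=.
apply/eqP; rewrite addr_eq0 -sumrN; apply/eqP; apply: eq_bigr=> a _.
rewrite -sumrN; apply: eq_bigr => b _; case: ifP => _; rewrite ?oppr0 //.
Qed.

Lemma kd_kd x B : kd (kd x) B = 0.
Proof.
pose g t t' := if [&& t \notin B, t' \notin B & t' != t] then
   sgk t (t |: B) * sgk t' (t' |: (t |: B)) * x (t' |: (t |: B)) else 0.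
have -> : kd (kd x) B = \sum_t \sum_t' g t t'.
  rewrite /kd big_mkcond; apply: eq_bigr => t _; case: ifP => tB.
    rewrite mulr_sumr big_mkcond; apply: eq_bigr => t' _.
    rewrite /g tB in_setU1 negb_or andbC /=.
    by case: ifP => _; rewrite ?mulrA.
  by rewrite big1 // => t' _; rewrite /g tB.
apply: asym_sum => [t|t t']; first by rewrite /g eqxx !andbF.
rewrite /g; rewrite [t' == t]eq_sym; case: (t \notin B) / idP => tB;
  case: (t' \notin B) / idP => t'B; rewrite /= ?oppr0 //.
case: eqP => [_|/eqP ntt']; rewrite /= ?oppr0 //.
rewrite setUCA.
set A := t |: (t' |: B).
have tA : t \in A by rewrite /A setU11.
have t'A : t' \in A by rewrite /A setU1r ?setU11.
have sw := sgk_swap ntt' tA t'A.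
have e1 : A :\ t = t' |: B by rewrite setU1K // in_setU1 negb_or ntt'.
have e2 : A :\ t' = t |: B.
  by rewrite /A setUCA setU1K // in_setU1 negb_or eq_sym ntt'.
rewrite e1 e2 in sw.
have sw2 : sgk t' A * sgk t (t |: B) = - (sgk t A * sgk t' (t' |: B)).
  by rewrite sw opprK.
rewrite (mulrC (sgk t (t |: B))) sw2; ring.
Qed.

Lemma sum_neq0 (I : finType) (P : pred I) (F : I -> k) :
  \sum_(i | P i) F i != 0 -> exists i, P i && (F i != 0).
Proof.
move=> h; case: (boolP [exists i, P i && (F i != 0)]) => [/existsP[i hi]|/existsPn h0].
  by exists i.
move: h; rewrite big1 ?eqxx // => i Pi; move: (h0 i); rewrite Pi /= negbK.
by move/eqP.
Qed.

Lemma sq_trick (u1 u2 u3 u4 : k) : u2 * u2 = 1 -> u3 * u3 = 1 ->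
  u1 * u2 = - (u3 * u4) -> u1 * u3 = - (u2 * u4).
Proof.
move=> h2 h3 h.
transitivity ((u1 * u2) * (u3 * u2)); first by rewrite -[LHS]mulr1 -h2; ring.
rewrite h; transitivity (- (u3 * u3) * (u4 * u2)); first by ring.
by rewrite h3; ring.
Qed.

Definition sle b (x : {set 'I_n} -> k) := forall A, x A != 0 -> mdiv (L A) b.
Definition ssc (x : {set 'I_n} -> k) := forall A, x A != 0 -> scarf s A.

Lemma kdD x y B : kd (fun A => x A + y A) B = kd x B + kd y B.
Proof. by rewrite /kd -big_split; apply: eq_bigr => t _; rewrite mulrDr. Qed.

Lemma kdB x y B : kd (fun A => x A - y A) B = kd x B - kd y B.
Proof. by rewrite /kd -sumrB; apply: eq_bigr => t _; rewrite mulrBr. Qed.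

Lemma kd0 B : kd (fun _ => 0) B = 0.
Proof. by rewrite /kd big1 // => t _; rewrite mulr0. Qed.

Lemma kd_sle b x : sle b x -> sle b (kd x).
Proof.
move=> h B /sum_neq0 [t /andP[tB]]; rewrite mulf_eq0 negb_or => /andP[_ /h].
move=> hb; apply: mdiv_trans hb; exact: L_mono (subsetUr _ _).
Qed.

Lemma setD1U1 t v B : t != v -> (t |: B) :\ v = t |: (B :\ v).
Proof.
move=> ntv; apply/setP => u; rewrite !inE; case: (eqVneq u t) => [->|] //=.
by rewrite ntv.
Qed.

Lemma kd_split x B v : v \in B ->
  kd x (B :\ v) = sgk v B * x B +
     \sum_(t | t \notin B) sgk t ((t |: B) :\ v) * x ((t |: B) :\ v).
Proof.
move=> vB; rewrite /kd (bigD1 v) ?setD11 //= setD1K //; congr (_ + _).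
apply: eq_big => t.
  rewrite in_setD1 negb_and negbK; case: (eqVneq t v) => [->|] //=.
  by rewrite vB.
  by rewrite andbT.
move=> /andP[_ ntv]; by rewrite setD1U1.
Qed.

Definition cone t0 (x : {set 'I_n} -> k) A :=
  if t0 \in A then sgk t0 A * x (A :\ t0) else 0.

Lemma cone_sle b t0 x : mdiv (s t0) b -> sle b x -> sle b (cone t0 x).
Proof.
move=> ht0 hx A; rewrite /cone; case: ifP => t0A; last by rewrite eqxx.
rewrite mulf_eq0 negb_or => /andP[_ /hx]; rewrite !L_le => /forall_inP h.
apply/forall_inP => i iA; case: (eqVneq i t0) => [->//|nit0].
by apply: h; rewrite in_setD1 nit0.
Qed.

Lemma cone_kd t0 x B : kd x =1 (fun _ => 0) -> kd (cone t0 x) B = x B.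
Proof.
move=> hx; case: (boolP (t0 \in B)) => t0B.
  have := kd_split x t0B; rewrite hx => /esym /eqP; rewrite addr_eq0 => /eqP e.
  rewrite /kd; have -> : x B = sgk t0 B * (sgk t0 B * x B) by rewrite mulrA sgk_sq mul1r.
  rewrite e mulrN mulr_sumr -sumrN; apply: eq_bigr => t tB.
  rewrite /cone setU1r // mulrA mulrA -mulNr; congr (_ * _).
  have ntt0 : t != t0 by apply: contraNneq tB => ->.
  apply: sq_trick; rewrite ?sgk_sq //.
  have := sgk_swap ntt0 (setU11 t B) (setU1r t t0B).
  by rewrite setU1K.
rewrite /kd (bigD1 t0) //= big1 ?addr0 => [|t /andP[tB ntt0]].
  by rewrite /cone setU11 setU1K // mulrA sgk_sq mul1r.
by rewrite /cone in_setU1 eq_sym (negbTE ntt0) (negbTE t0B) mulr0.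
Qed.

Definition prj p (x : {set 'I_n} -> k) A := if #|A| == p then x A else 0.

Lemma kd_prj p x B : kd (prj p.+1 x) B = prj p (kd x) B.
Proof.
rewrite /prj /kd; case: ifP => hB.
  apply: eq_bigr => t tB; by rewrite cardsU1 tB add1n eqSS hB.
rewrite big1 // => t tB; by rewrite cardsU1 tB add1n eqSS hB mulr0.
Qed.


Definition fibp (al : 'X_{1..m}) (t : 'I_n) : bool :=
  [forall A : {set 'I_n}, (L A == al) ==> (L (t |: A) == al) && (L (A :\ t) == al)].
Definition vvo al := [pick t | fibp al t].

Lemma nonscarfP A : ~~ scarf s A -> exists2 B, B != A & L B = L A.
Proof. by move=> /forallPn [B]; rewrite negb_imply negbK => /andP[nBA /eqP e]; exists B. Qed.

Lemma vv_spec (hg : generic_type s) A : ~~ scarf s A -> exists v, vvo (L A) = Some v /\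
  forall A', L A' = L A -> L (v |: A') = L A /\ L (A' :\ v) = L A.
Proof.
move=> nA; have [B nBA eBA] := nonscarfP nA.
have [A0 [nA0 eA0]] : exists A0, A0 != set0 /\ L A0 = L A.
  case: (eqVneq A set0) => [A0|]; last by exists A.
  by exists B; split => //; rewrite -A0.
have [Il [Iu [sIl hI]]] := hg A0 nA0.
have [hAl hAu] : Il \subset A /\ A \subset Iu by apply/hI; rewrite eA0.
have [hBl hBu] : Il \subset B /\ B \subset Iu by apply/hI; rewrite eBA eA0.
have : ~~ (Iu \subset Il).
  apply/negP => sIu; move/eqP: nBA; apply.
  have eI : Il = Iu by apply/eqP; rewrite eqEsubset sIl sIu.
  apply/eqP; rewrite eqEsubset.
  by rewrite (subset_trans hBu) ?(subset_trans hAu) // -eI.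
move=> /subsetPn [v vIu vIl].
have fib : forall A', L A' = L A -> L (v |: A') = L A /\ L (A' :\ v) = L A.
  move=> A' e; have [h1 h2] : Il \subset A' /\ A' \subset Iu by apply/hI; rewrite e eA0.
  rewrite -eA0; split; apply/hI; split.
  - exact: subset_trans h1 (subsetUr _ _).
  - by rewrite subUset sub1set vIu h2.
  - by rewrite subsetD1 h1 vIl.
  - exact: subset_trans (subD1set _ _) h2.
have : exists v, fibp (L A) v.
  exists v; apply/forallP => A'; apply/implyP => /eqP /fib [-> ->].
  by rewrite !eqxx.
rewrite /vvo; case: pickP => [v' hv' _|h [v0 hv0]]; last by move: (h v0); rewrite hv0.
exists v'; split => // A' e; move/forallP: hv' => /(_ A'); rewrite e eqxx /=.
by move=> /andP[/eqP -> /eqP ->].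
Qed.

Definition stepw D x A : k := if (~~ scarf s A) && (dg (L A) == D) then
  (if vvo (L A) is Some v then (if v \in A then sgk v A * x (A :\ v) else 0) else 0)
  else 0.

Lemma stepw_sle (hg : generic_type s) b D x : sle b x -> sle b (stepw D x).
Proof.
move=> hx A; rewrite /stepw; case: ifP => [/andP[nA _]|]; last by rewrite eqxx.
have [v [-> fib]] := vv_spec hg nA; case: ifP => vA; last by rewrite eqxx.
rewrite mulf_eq0 negb_or => /andP[_ /hx]; by have [_ ->] := fib A erefl.
Qed.

Lemma stepw_main (hg : generic_type s) D x B :
  (forall A, ~~ scarf s A -> (D.+1 <= dg (L A))%N -> x A = 0) ->
  (forall B, ~~ scarf s B -> kd x B = 0) ->
  ~~ scarf s B -> (D <= dg (L B))%N -> x B = kd (stepw D x) B.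
Proof.
move=> hx hk nB hD.
have T : forall t, t \notin B -> stepw D x (t |: B) != 0 ->
    L (t |: B) = L B /\ dg (L B) = D.
  move=> t tB; rewrite /stepw; case: ifP => [/andP[_ /eqP hd] _|]; last by rewrite eqxx.
  have e : L (t |: B) = L B.
    apply/esym/dg_eq; first exact: L_mono (subsetUr _ _).
    by rewrite hd.
  by rewrite -e.
case: (eqVneq (dg (L B)) D) => hdB; last first.
  rewrite hx //; last by rewrite ltn_neqAle eq_sym hdB hD.
  rewrite /kd big1 // => t tB; apply/eqP; rewrite mulf_eq0; apply/orP; right.
  apply/negPn/negP => /(T _ tB) [_ e]; by rewrite e eqxx in hdB.
have [v [hv fib]] := vv_spec hg nB.
have W : forall t, t \notin B -> stepw D x (t |: B) = if L (t |: B) == L B then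
    (if v \in t |: B then sgk v (t |: B) * x ((t |: B) :\ v) else 0) else 0.
  move=> t tB; case: eqP => e.
    have nt : ~~ scarf s (t |: B) by exact: nonscarf_fiber nB e.
    by rewrite /stepw e hv hdB eqxx nt.
  by case: (eqVneq (stepw D x (t |: B)) 0) => // /(T _ tB) [e' _].
rewrite /kd; under eq_bigr => t tB do rewrite (W t tB).
case: (boolP (v \in B)) => vB.
- have e1 : L (B :\ v) = L B by case: (fib B erefl).
  have nB' : ~~ scarf s (B :\ v) by exact: nonscarf_fiber nB e1.
  have := kd_split x vB; rewrite hk // => /esym/eqP; rewrite addr_eq0 => /eqP eX.
  have -> : x B = sgk v B * (sgk v B * x B) by rewrite mulrA sgk_sq mul1r.
  rewrite eX mulrN mulr_sumr -sumrN; apply: eq_bigr => t tB.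
  have ntv : t != v by apply: contraNneq tB => ->.
  rewrite setU1r //; case: eqP => e.
    rewrite mulrA mulrA -mulNr; congr (_ * _).
    apply/esym; apply: sq_trick; rewrite ?sgk_sq //.
    have := sgk_swap ntv (setU11 t B) (setU1r t vB).
    by rewrite setU1K.
  rewrite mulr0 (hx ((t |: B) :\ v)) ?mulr0 ?oppr0 //.
    apply/negP => sc; rewrite setD1U1 // in sc.
    have := scarf_face _ sc; rewrite in_setD1 negb_and tB orbT => /(_ isT).
    by rewrite (negbTE nB').
  have le1 : mdiv (L B) (L ((t |: B) :\ v)).
    rewrite -e1; apply: L_mono; apply: setSD; exact: subsetUr.
  have ne : L ((t |: B) :\ v) != L B.
    apply/eqP => e2; have [e3 _] := fib _ e2.
    by rewrite setD1K ?setU1r // in e3.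
  rewrite ltnNge; apply/negP => h; move/eqP: ne; apply; apply/esym.
  by apply: dg_eq le1 _; rewrite hdB.
- rewrite (bigD1 v) //= big1 ?addr0.
    have [e _] := fib B erefl.
    by rewrite e eqxx setU11 setU1K // mulrA sgk_sq mul1r.
  move=> t /andP[tB ntv]; case: eqP => _; rewrite ?mulr0 //.
  rewrite in_setU1 (negbTE vB) orbF.
  have -> : (v == t) = false by apply/negbTE; rewrite eq_sym.
  by rewrite mulr0.
Qed.

Lemma reduce (hg : generic_type s) b D x : sle b x ->
  (forall A, ~~ scarf s A -> (D <= dg (L A))%N -> x A = 0) ->
  (forall B, ~~ scarf s B -> kd x B = 0) ->
  exists v, sle b v /\ forall A, ~~ scarf s A -> x A + kd v A = 0.
Proof.
elim: D x => [|D IH] x hs hx hk.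
  exists (fun _ => 0); split; first by move=> A; rewrite eqxx.
  by move=> A nA; rewrite kd0 addr0 hx.
pose w := stepw D x.
pose x' := fun A => x A - kd w A.
have hs' : sle b x'.
  move=> A; rewrite /x'; case: (eqVneq (x A) 0) => [->|/hs //].
  rewrite sub0r oppr_eq0; exact: kd_sle (stepw_sle hg hs) A.
have hx' : forall A, ~~ scarf s A -> (D <= dg (L A))%N -> x' A = 0.
  by move=> A nA hA; rewrite /x' -(stepw_main hg hx hk nA hA) subrr.
have hk' : forall B, ~~ scarf s B -> kd x' B = 0.
  by move=> B nB; rewrite /x' kdB kd_kd subr0 hk.
have [v' [hv' h]] := IH x' hs' hx' hk'.
exists (fun A => v' A - w A); split.
  move=> A; case: (eqVneq (v' A) 0) => [->|/hv' //].
  rewrite sub0r oppr_eq0; exact: (@stepw_sle hg b D x hs A).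
move=> A nA; rewrite kdB -(h A nA) /x'; ring.
Qed.

Lemma kacyc (hg : generic_type s) b p x t0 : mdiv (s t0) b -> sle b x -> ssc x ->
  (forall A, x A != 0 -> #|A| = p) -> (forall B, kd x B = 0) ->
  exists y, [/\ sle b y, ssc y, (forall A, y A != 0 -> #|A| = p.+1)
            & forall B, kd y B = x B].
Proof.
move=> ht0 hs hsc hp hk.
pose w := cone t0 x.
have hw : forall B, kd w B = x B by move=> B; exact: cone_kd.
have [v [hv hu]] : exists v, sle b v /\ forall A, ~~ scarf s A -> w A + kd v A = 0.
  apply: (reduce hg (D := (dg b).+1)); first exact: cone_sle.
    move=> A nA hA; apply/eqP/negPn/negP => /(cone_sle ht0 hs) /dg_le.
    by rewrite leqNgt hA.
  move=> B nB; rewrite hw; apply/eqP/negPn/negP => /hsc.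
  by rewrite (negbTE nB).
pose u := fun A => w A + kd v A.
exists (prj p.+1 u); split.
- move=> A; rewrite /prj; case: ifP => _; last by rewrite eqxx.
  rewrite /u => hA; case: (eqVneq (w A) 0) => [h0|/(cone_sle ht0 hs) //].
  by move: hA; rewrite h0 add0r; exact: kd_sle hv A.
- move=> A; rewrite /prj; case: ifP => _; last by rewrite eqxx.
  by case: (boolP (scarf s A)) => // nA; rewrite /u hu ?eqxx.
- by move=> A; rewrite /prj; case: ifP => [/eqP //|]; rewrite eqxx.
- move=> B; rewrite kd_prj /prj /u kdD hw.
  rewrite kd_kd addr0; case: ifP => // /negbT hB.
  apply/esym/eqP/negPn/negP => /hp /eqP; by rewrite (negbTE hB).
Qed.


Lemma sum_neq0R (I : finType) (P : pred I) (F : I -> R) :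
  \sum_(i | P i) F i != 0 -> exists i, P i && (F i != 0).
Proof.
move=> h; case: (boolP [exists i, P i && (F i != 0)]) => [/existsP[i hi]|/existsPn h0].
  by exists i.
move: h; rewrite big1 ?eqxx // => i Pi; move: (h0 i); rewrite Pi /= negbK.
by move/eqP.
Qed.

Lemma coefXM (q u : 'X_{1..m}) (p : R) :
  ('X_[q] * p)@_u = if mdiv q u then p@_(mquot u q) else 0.
Proof.
rewrite mulrC; case: ifP => h.
  have e : u = (q + mquot u q)%MM.
    apply/mnmP=> j; rewrite mnmDE /mquot mnmE subnKC //; exact: (mdivP _ _ h j).
  by rewrite {1}e mcoeffMX.
apply/eqP; rewrite mcoeff_eq0; apply/negP => hu.
move: hu; rewrite (perm_mem (msuppMX p q)) => /mapP [m' _ e].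
move: h; rewrite e; move/negP; apply; apply/mdivP => j; rewrite mnmDE.
exact: leq_addr.
Qed.

Lemma sgnE t A : sgn k m t A = (sgk t A)%:MP.
Proof. by rewrite /sgn /sgk rmorphXn rmorphN1. Qed.

Definition strand b (c : {set 'I_n} -> R) A : k :=
  if mdiv (L A) b then (c A)@_(mquot b (L A)) else 0.

Lemma kd_ext x y B : x =1 y -> kd x B = kd y B.
Proof. by move=> e; apply: eq_bigr => t _; rewrite e. Qed.

Lemma strand_bd b c B : (forall A, c A != 0 -> scarf s A) ->
  strand b (bd s c) B = kd (strand b c) B.
Proof.
move=> hc; rewrite /strand /kd; case: ifP => hB; last first.
  rewrite big1 // => t tB; case: ifP; rewrite ?mulr0 // => h.
  by move: hB; rewrite (mdiv_trans (L_mono (subsetUr [set t] B)) h).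
rewrite /bd raddf_sum /= big_mkcond [RHS]big_mkcond /=; apply: eq_bigr => t _.
case: (boolP (t \notin B)) => tB //=.
have hBt := L_mono (subsetUr [set t] B).
case: (boolP (scarf s (t |: B))) => sc; last first.
  have -> : c (t |: B) = 0 by apply/eqP/negPn/negP => /hc; rewrite (negbTE sc).
  by rewrite mcoeff0 if_same mulr0.
rewrite sgnE -mulrA mcoeffCM coefXM; congr (_ * _).
have E : mdiv (mquot (L (t |: B)) (L B)) (mquot b (L B)) = mdiv (L (t |: B)) b.
  apply/mdivP/mdivP => h j; move: (h j) (mdivP _ _ hBt j) (mdivP _ _ hB j);
  rewrite /mquot !mnmE; lia.
rewrite E; case: ifP => // h; congr (_ @_ _); apply/mnmP => j.
move: (mdivP _ _ hBt j) (mdivP _ _ hB j) (mdivP _ _ h j); rewrite /mquot !mnmE; lia.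
Qed.

Lemma strand_eq (P Q : {set 'I_n} -> R) B :
  (forall b, strand b P B = strand b Q B) -> P B = Q B.
Proof.
move=> h; apply/mpolyP => u; move: (h (u + L B)%MM); rewrite /strand.
have -> : mdiv (L B) (u + L B)%MM by apply/mdivP => j; rewrite mnmDE leq_addl.
have -> : mquot (u + L B)%MM (L B) = u by apply/mnmP => j; rewrite /mquot !mnmE addnK.
done.
Qed.

Definition recon (bs : seq 'X_{1..m}) (y : 'X_{1..m} -> {set 'I_n} -> k) A : R :=
  \sum_(b <- bs) y b A *: 'X_[mquot b (L A)].

Lemma strand_recon bs y b' A : uniq bs ->
  (forall b A, b \in bs -> y b A != 0 -> mdiv (L A) b) ->
  strand b' (recon bs y) A = if b' \in bs then y b' A else 0.
Proof.
move=> ub hy; rewrite /strand /recon; case: ifP => hA; last first.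
  case: ifP => // hb; apply/esym/eqP/negPn/negP => /(hy _ _ hb).
  by rewrite hA.
rewrite raddf_sum /=.
have -> : \sum_(b <- bs) (y b A *: 'X_[mquot b (L A)])@_(mquot b' (L A)) =
          \sum_(b <- bs) (if b == b' then y b' A else 0).
  rewrite big_seq_cond [RHS]big_seq_cond; apply: eq_bigr => b /andP[hb _].
  rewrite mcoeffZ mcoeffX; case: (eqVneq b b') => [->|nb]; first by rewrite eqxx mulr1.
  case: (eqVneq (y b A) 0) => [->|/(hy _ _ hb) h]; first by rewrite mul0r.
  case: eqP => e; last by rewrite mulr0.
  case/eqP: nb; apply/mnmP => j; move/mnmP: e => /(_ j).
  move: (mdivP _ _ h j) (mdivP _ _ hA j); rewrite /mquot !mnmE; lia.
case: ifP => hb.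
  rewrite (big_rem b') //= eqxx big_seq big1 ?addr0 // => b hb'.
  case: eqP => // e; move: hb'; rewrite e.
  by rewrite mem_rem_uniq // inE eqxx.
by rewrite big_seq big1 // => b hb'; case: eqP => // e; move: hb; rewrite -e hb'.
Qed.


Implicit Types (c d : {set 'I_n} -> R).

Lemma chain_bd p c : chain s p.+1 c -> chain s p (bd s c).
Proof.
move=> hc B /sum_neq0R [t /andP[/andP[tB sc]]].
rewrite mulf_eq0 negb_or => /andP[_ /hc [_ hcard]].
split; first exact: scarf_face sc.
by move: hcard; rewrite cardsU1 tB add1n => -[].
Qed.

Lemma chain_sc p c : chain s p c -> forall A, c A != 0 -> scarf s A.
Proof. by move=> hc A /hc []. Qed.

Lemma strand0 b A : strand b (fun _ : {set 'I_n} => (0 : R)) A = 0.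
Proof. by rewrite /strand mcoeff0 if_same. Qed.

Lemma strand_nz b c A : strand b c A != 0 -> c A != 0.
Proof.
rewrite /strand; case: ifP => _; last by rewrite eqxx.
by apply: contraNneq => ->; rewrite mcoeff0.
Qed.

Lemma choose_family (bs : seq 'X_{1..m}) (Q : 'X_{1..m} -> ({set 'I_n} -> k) -> Prop) :
  (forall b, b \in bs -> exists y, Q b y) ->
  exists Y : 'X_{1..m} -> {set 'I_n} -> k, forall b, b \in bs -> Q b (Y b).
Proof.
elim: bs => [|b0 bs IH] h; first by exists (fun _ _ => 0).
have [y0 hy0] := h b0 (mem_head _ _).
have [Y hY] : exists Y : 'X_{1..m} -> {set 'I_n} -> k, forall b, b \in bs -> Q b (Y b).
  by apply: IH => b hb; apply: h; rewrite inE hb orbT.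
exists (fun b => if b == b0 then y0 else Y b) => b; rewrite inE.
by case: eqP => [->|_ /= hb]; [|exact: hY].
Qed.

Lemma exact_gen (hg : generic_type s) p c : chain s p c -> (forall B, bd s c B = 0) ->
  (forall b A, strand b c A != 0 -> exists t0, mdiv (s t0) b) ->
  exists d, chain s p.+1 d /\ forall B, bd s d B = c B.
Proof.
move=> hc hbd hst.
pose bs := undup [seq (u + L A)%MM | A <- enum [set: {set 'I_n}], u <- msupp (c A)].
have hbs : forall b A, strand b c A != 0 -> b \in bs.
  move=> b A; rewrite /strand; case: ifP => hA; last by rewrite eqxx.
  rewrite -mcoeff_msupp => hu; rewrite mem_undup.
  have -> : b = (mquot b (L A) + L A)%MM.
    by apply/mnmP => j; rewrite mnmDE /mquot mnmE subnK //; exact: (mdivP _ _ hA j).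
  apply: (allpairs_f_dep (fun A u => (u + L A)%MM)) => //.
  by rewrite mem_enum inE.
have [Y hY] : exists Y : 'X_{1..m} -> {set 'I_n} -> k, forall b, b \in bs ->
    [/\ sle b (Y b), ssc (Y b), (forall A, Y b A != 0 -> #|A| = p.+1)
      & forall B, kd (Y b) B = strand b c B].
  apply: (@choose_family bs (fun b y => [/\ sle b y, ssc y,
     (forall A, y A != 0 -> #|A| = p.+1) & forall B, kd y B = strand b c B])) => b _.
  have hk : forall B, kd (strand b c) B = 0.
    move=> B; rewrite -strand_bd; last exact: chain_sc hc.
    by rewrite /strand hbd mcoeff0 if_same.
  case: (boolP [exists A, strand b c A != 0]) => [/existsP [A hA]|/existsPn h0].
    have [t0 ht0] := hst _ _ hA.
    apply: (kacyc hg (p := p) ht0).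
    - by move=> A'; rewrite /strand; case: ifP => //; rewrite eqxx.
    - by move=> A' /strand_nz /(chain_sc hc).
    - by move=> A' /strand_nz /hc [].
    - exact: hk.
  exists (fun _ => 0); split.
  - by move=> A; rewrite eqxx.
  - by move=> A; rewrite eqxx.
  - by move=> A; rewrite eqxx.
  - by move=> B; rewrite kd0; move: (h0 B); rewrite negbK => /eqP.
have ub : uniq bs by exact: undup_uniq.
have hle : forall b A, b \in bs -> Y b A != 0 -> mdiv (L A) b.
  by move=> b A hb; have [h _ _ _] := hY b hb; exact: h.
pose d := recon bs Y.
have hd : chain s p.+1 d.
  move=> A hA; have : has (fun b => Y b A != 0) bs.
    apply/negPn/negP => hn; move/eqP: hA; apply; rewrite /d /recon big_seq big1 //.
    move=> b hb; case: (eqVneq (Y b A) 0) => [->|h]; first by rewrite scale0r.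
    by case/negP: hn; apply/hasP; exists b.
  case/hasP=> b hb hYb; have [_ hsc hsz _] := hY b hb; split; [exact: hsc | exact: hsz].
exists d; split; first exact: hd.
move=> B; apply: (@strand_eq (bd s d) c B) => b.
rewrite strand_bd; last exact: chain_sc hd.
rewrite (kd_ext _ (fun A => strand_recon b A ub hle)).
case: (boolP (b \in bs)) => hb.
  have [_ _ _ <-] := hY b hb; apply: kd_ext => A /=.
  done.
rewrite kd0; apply/esym/eqP/negPn/negP => /hbs; by rewrite (negbTE hb).
Qed.


Lemma ideal_coef (P : R) u : in_ideal s P -> P@_u != 0 -> exists i, mdiv (s i) u.
Proof.
move=> [q ->]; rewrite raddf_sum /= => /sum_neq0 [i /andP[_]].
rewrite mulrC coefXM; case: ifP => [h _|_]; [by exists i | by rewrite eqxx].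
Qed.

Lemma main (hmin : minimal_gens s) (hg : generic_type s) :
  scarf_minimal_free_resolution k s.
Proof.
split; [|split; [|split; [|split; [|split; [|split]]]]].
- move=> i c; exact: chain_bd.
- move=> i c hc B; apply: (@strand_eq (bd s (bd s c)) (fun _ => 0) B) => b.
  rewrite strand_bd; last exact: chain_sc (chain_bd hc).
  rewrite (kd_ext _ (fun A => strand_bd b A (chain_sc hc))).
  by rewrite kd_kd strand0.
- move=> c _.
  exists (fun i => if scarf s [set i] then sgn k m i [set i] * c [set i] else 0).
  rewrite /bd big_mkcond; apply: eq_bigr => t _; rewrite in_set0 /= setU0 L1 L0.
  have -> : mquot (s t) 0%MM = s t by apply/mnmP => j; rewrite /mquot !mnmE subn0.
  by case: ifP => _; rewrite ?mul0r // mulrAC.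
- move=> r; case: (boolP (scarf s set0)) => h0.
    exists (fun A => if A == set0 then r else 0); split.
      move=> A /=; case: (eqVneq A set0) => [->|nA]; last by rewrite eqxx.
      by move=> _; split => //; rewrite cards0.
    rewrite eqxx subrr; exists (fun _ => 0); by rewrite big1 // => i _; rewrite mul0r.
  exists (fun _ => 0); split; first by move=> A; rewrite eqxx.
  rewrite subr0; have [B nB e] := nonscarfP h0.
  have [t tB] := set0Pn _ nB.
  have st : s t = 0%MM.
    apply/mnmP => j; move: (mdivP _ _ (L_ge tB) j); rewrite e L0 !mnmE; lia.
  exists (fun i => if i == t then r else 0).
  rewrite (bigD1 t) //= eqxx big1 ?addr0; first by rewrite st mpolyX0 mulr1.
  by move=> i /negbTE ->; rewrite mul0r.
- move=> c hc hI; apply: (exact_gen hg hc).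
    move=> B; rewrite /bd big1 // => t /andP[tB _].
    have -> : c (t |: B) = 0.
      by apply/eqP/negPn/negP => /hc [_]; rewrite cardsU1 tB.
    by rewrite mulr0.
  move=> b A hA; have := strand_nz hA => /hc [_ /eqP]; rewrite cards_eq0 => /eqP eA.
  move: hA; rewrite /strand eA L0; case: ifP => _; last by rewrite eqxx.
  have -> : mquot b 0%MM = b by apply/mnmP => j; rewrite /mquot !mnmE subn0.
  exact: ideal_coef.
- move=> i c hc hbd; apply: (exact_gen hg hc hbd) => b A hs.
  have hA := strand_nz hs.
  have hLb : mdiv (L A) b by move: hs; rewrite /strand; case: ifP => // _; rewrite eqxx.
  have [_ hA'] := hc A hA.
  have : A != set0 by apply/eqP => eA; move: hA'; rewrite eA cards0.
  case/set0Pn => t tA; exists t; exact: mdiv_trans (L_ge tA) hLb.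
- move=> i c hc B; rewrite /bd raddf_sum /= big1 // => t /andP[tB sc].
  rewrite sgnE -mulrA mcoeffCM coefXM; case: ifP => h; last by rewrite mulr0.
  exfalso; have nB : B != t |: B.
    by apply/eqP => /setP /(_ t); rewrite setU11 (negbTE tB).
  move/scarfP: sc => /(_ _ nB); apply/negP; rewrite negbK; apply/eqP.
  apply/mnmP=> j; move: (mdivP _ _ h j) (mdivP _ _ (L_mono (subsetUr [set t] B)) j).
  rewrite /mquot !mnmE; lia.
Qed.

End Proof.

Theorem corollary2p6 (k : fieldType) (m n : nat) (s : 'I_n -> 'X_{1..m}) :
  minimal_gens s -> generic_type s -> scarf_minimal_free_resolution k s.
Proof. move=> h1 h2; exact: main. Qed.
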